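(* Let $\Sigma=(X,U,F)$ be a system, $Q\subset X$ a controlled invariant set, and $V\subset U$ a finite cover of $Q$ such that: (C.1) $Q_a\cap Q_b=\emptyset$ for all distinct $a,b\in V$; (C.2) for all $a,b\in V$ with $M_{ab}=1$ there exists $K\subset Q_a$ such that $Q_b\subset F(K,a)$; (C.3) $Q_c=\emptyset$ for every $c\in U\setminus V$. Let $\mathcal{A}_V=\{Q_a:a\in V\}$ and $G_V:\mathcal{A}_V\to U$, $G_V(Q_a)=a$. Then \[h^{fb}_{inv}(Q)=\inf\{h_{inv}(\mathcal{B},G_{\mathcal{B}}):(\mathcal{B},G_{\mathcal{B}})\text{ is a refinement of }(\mathcal{A}_V,G_V)\}.\]
   Context: A system is a triple $\Sigma=(X,U,F)$ where $X,U$ are nonempty sets and $F:X\times U\rightrightarrows X$ is a set-valued map with $F(x,u)\neq\emptyset$ for all $(x,u)$; for $A\subset X$, $F(A,u)=\bigcup_{x\in A}F(x,u)$. $Q\subset X$ is controlled invariant if for every $x\in Q$ there is $u\in U$ with $F(x,u)\subset Q$. For $u\in U$ put $Q_u=\{x\in Q:F(x,u)\subset Q\}$. A set $V\subset U$ is a cover of $Q$ if $Q\subset\bigcup_{a\in V}Q_a$; the admissible matrix $M_{Q,V}=(M_{ab})_{a,b\in V}$ has $M_{ab}=1$ if there exists $x\in Q_a$ with $F(x,a)\cap Q_b\neq\emptyset$, and $0$ otherwise. An invariant cover of $Q$ is a pair $(\mathcal{A},G)$ where $\mathcal{A}$ is a finite cover of $Q$ (by subsets of $Q$) and $G:\mathcal{A}\to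 U$ satisfies $F(A,G(A))\subset Q$ for all $A\in\mathcal{A}$. For $\mathcal{S}\subset\mathcal{A}^n$, $\alpha=\alpha(0)\cdots\alpha(n-1)\in\mathcal{S}$ and integer $0\le t<n-1$, let $P(\alpha|_{[0,t]})=\{A\in\mathcal{A}:\exists\hat\alpha\in\mathcal{S},\ \hat\alpha|_{[0,t]}=\alpha|_{[0,t]},\ A=\hat\alpha(t+1)\}$, and $P(\alpha|_{[0,n-1]})=P(\alpha)=\{\hat\alpha(0):\hat\alpha\in\mathcal{S}\}$. $\mathcal{S}$ is $(n,Q)$-spanning in $(\mathcal{A},G)$ if (1) the elements of $P(\alpha)$ cover $Q$, and (2) for every $\alpha\in\mathcal{S}$ and $0\le t<n-1$, $F(\alpha(t),G(\alpha(t)))\subset\bigcup_{A'\in P(\alpha|_{[0,t]})}A'$. Let $N(\mathcal{S})=\max_{\alpha\in\mathcal{S}}\prod_{t=0}^{n-1}\sharp P(\alpha|_{[0,t]})$, $r_{inv}(n,Q,\mathcal{A},G)=\min\{N(\mathcal{S}):\mathcal{S}\ (n,Q)\text{-spanning in }(\mathcal{A},G)\}$, $h_{inv}(\mathcal{A},G)=\lim_{n\to\infty}\frac1n\log r_{inv}(n,Q,\mathcal{A},G)$ ($\log$ base $2$), and the invariance feedback entropy $h^{fb}_{inv}(Q)=\inf_{(\mathcal{A},G)}h_{inv}(\mathcal{A},G)$ over all invariant covers of $Q$. A refinement of $(\mathcal{A}_V,G_V)$ is a pair $(\mathcal{B},G_{\mathcal{B}})$ where $\mathcal{B}$ is a finite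 cover of $Q$, every $B\in\mathcal{B}$ is contained in some $A\in\mathcal{A}_V$, and $G_{\mathcal{B}}(B)=G_V(A)$ for such $A$. *)

(* Defs.v *)
From HB Require Import structures.
From mathcomp Require Import all_boot all_order all_algebra.
From mathcomp Require Import all_classical all_reals all_analysis.
Set Implicit Arguments. Unset Strict Implicit. Unset Printing Implicit Defensive.
Import Order.TTheory GRing.Theory Num.Theory numFieldNormedType.Exports.
Local Open Scope classical_set_scope.
Local Open Scope ring_scope.

Definition img {X U : Type} (F : X -> U -> set X) (A : set X) (u : U) : set X :=
  [set y | exists2 x, A x & F x u y].

Definition is_system {X U : Type} (F : X -> U -> set X) : Prop :=
  forall x u, F x u !=set0.

Definition controlled_invariant {X U : Type} (F : X -> U -> set X) (Q : set X) : Prop :=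
  forall x, Q x -> exists u, F x u `<=` Q.

Definition Qu {X U : Type} (F : X -> U -> set X) (Q : set X) (u : U) : set X :=
  [set x | Q x /\ F x u `<=` Q].

Definition is_cover {X U : Type} (F : X -> U -> set X) (Q : set X) (V : set U) : Prop :=
  Q `<=` \bigcup_(a in V) Qu F Q a.

(* entry M_ab = 1 of the admissible matrix *)
Definition adm {X U : Type} (F : X -> U -> set X) (Q : set X) (a b : U) : Prop :=
  exists2 x, Qu F Q a x & (F x a `&` Qu F Q b) !=set0.

(* An invariant cover (A,G) with finite cover A = {A i | i : 'I_k} (A injective,
   so that the k indices correspond to k distinct subsets of Q). *)
Definition inv_cover {X U : Type} (F : X -> U -> set X) (Q : set X) (k : nat)
  (A : 'I_k -> set X) (G : 'I_k -> U) : Prop :=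
  [/\ injective A, (forall i, A i `<=` Q), Q `<=` \bigcup_(i in [set: 'I_k]) A i
    & forall i, img F (A i) (G i) `<=` Q].

(* at_ s t x : the t-th entry of the word s is x *)
Definition at_ {k : nat} (s : seq 'I_k) (t : nat) (x : 'I_k) : bool :=
  take t.+1 s == rcons (take t s) x.

(* P(alpha|[0,t]) ; for t = n-1 (or larger) it is P(alpha) = {beta(0) : beta in S} *)
Definition Pset {k n : nat} (S : {set n.-tuple 'I_k}) (al : n.-tuple 'I_k) (t : nat)
  : {set 'I_k} :=
  if (t.+1 < n)%N then
    finset (fun x => [exists be in S, (take t.+1 (tval be) == take t.+1 (tval al))
                              && at_ (tval be) t.+1 x])
  else finset (fun x => [exists be in S, at_ (tval be) 0 x]).

Definition P0 {k n : nat} (S : {set n.-tuple 'I_k}) : {set 'I_k} :=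
  finset (fun x => [exists be in S, at_ (tval be) 0 x]).

Definition spanning {X U : Type} (F : X -> U -> set X) (Q : set X) (k n : nat)
  (A : 'I_k -> set X) (G : 'I_k -> U) (S : {set n.-tuple 'I_k}) : Prop :=
  Q `<=` \bigcup_(i in [set i | i \in P0 S]) A i /\
  forall al : n.-tuple 'I_k, al \in S -> forall (t : nat) (x : 'I_k),
    (t.+1 < n)%N -> at_ (tval al) t x ->
    img F (A x) (G x) `<=` \bigcup_(j in [set j | j \in Pset S al t]) A j.

Definition NS {k n : nat} (S : {set n.-tuple 'I_k}) : nat :=
  \max_(al in S) \prod_(t < n) #|Pset S al t|.

Definition r_inv (R : realType) {X U : Type} (F : X -> U -> set X) (Q : set X)
  (k : nat) (A : 'I_k -> set X) (G : 'I_k -> U) (n : nat) : R :=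
  inf [set (NS S)%:R | S in [set S : {set n.-tuple 'I_k} | spanning F Q A G S]].

Definition log2 (R : realType) (x : R) : R := ln x / ln 2.

Definition h_inv (R : realType) {X U : Type} (F : X -> U -> set X) (Q : set X)
  (k : nat) (A : 'I_k -> set X) (G : 'I_k -> U) : R :=
  limn (fun n : nat => log2 (r_inv R F Q A G n) / n%:R).

Definition hfb_inv (R : realType) {X U : Type} (F : X -> U -> set X) (Q : set X) : R :=
  inf [set h | exists (k : nat) (A : 'I_k -> set X) (G : 'I_k -> U),
         inv_cover F Q A G /\ h = h_inv R F Q A G].

Definition refinement {X U : Type} (F : X -> U -> set X) (Q : set X) (V : set U)
  (k : nat) (B : 'I_k -> set X) (GB : 'I_k -> U) : Prop :=
  [/\ injective B, Q `<=` \bigcup_(i in [set: 'I_k]) B i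
    & forall i, exists a, [/\ V a, B i `<=` Qu F Q a & GB i = a]].

(* Main.v *)
Require Import Defs.
From HB Require Import structures.
From mathcomp Require Import all_boot all_order all_algebra.
From mathcomp Require Import all_classical all_reals all_analysis.
Local Open Scope classical_set_scope.
Local Open Scope ring_scope.
Import Order.TTheory GRing.Theory Num.Theory.

Lemma spanning_ext (X U : Type) (F : X -> U -> set X) (Q : set X) k n
  (A : 'I_k -> set X) (G G' : 'I_k -> U) (S : {set n.-tuple 'I_k}) :
  (forall x, img F (A x) (G x) = img F (A x) (G' x)) ->
  spanning F Q A G S -> spanning F Q A G' S.
Proof.
move=> h [h1 h2]; split => // al Hal t x Ht Hat; rewrite -h; exact: h2.
Qed.

Lemma h_inv_ext (R : realType) (X U : Type) (F : X -> U -> set X) (Q : set X) k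
  (A : 'I_k -> set X) (G G' : 'I_k -> U) :
  (forall x, img F (A x) (G x) = img F (A x) (G' x)) ->
  h_inv R F Q A G = h_inv R F Q A G'.
Proof.
move=> h; rewrite /h_inv.
suff -> : r_inv R F Q A G = r_inv R F Q A G' by [].
apply: funext => n; rewrite /r_inv.
congr inf; apply/seteqP; split => _ [S HS <-]; exists S => //.
  exact: spanning_ext HS.
by apply: spanning_ext HS => x; rewrite h.
Qed.

Lemma r_inv_Q0 (R : realType) (X U : Type) (F : X -> U -> set X) (Q : set X) k
  (A : 'I_k -> set X) (G : 'I_k -> U) n :
  Q = set0 -> r_inv R F Q A G n = 0.
Proof.
move=> Q0; rewrite /r_inv.
have Hs : spanning F Q A G (finset.set0 : {set n.-tuple 'I_k}).
  by split; [rewrite Q0 => x [] | move=> al; rewrite inE].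
have H0 : [set (NS S)%:R | S in [set S : {set n.-tuple 'I_k} | spanning F Q A G S]] (0:R).
  by exists finset.set0 => //; rewrite /NS big_set0.
apply/eqP; rewrite eq_le; apply/andP; split.
  apply: ge_inf => //; exists 0 => _ [S _ <-]; exact: ler0n.
apply: lb_le_inf; first by exists 0.
by move=> _ [S _ <-]; exact: ler0n.
Qed.

Lemma img0 (X U : Type) (F : X -> U -> set X) u : img F set0 u = set0.
Proof. by apply/seteqP; split => y // [x]. Qed.

Theorem corollary3p12 (R : realType) (X U : Type) (F : X -> U -> set X)
  (Q : set X) (V : set U) :
  (exists x : X, True) -> (exists u : U, True) ->
  is_system F ->
  controlled_invariant F Q ->
  finite_set V ->
  is_cover F Q V ->
  (* (C.1) *)
  (forall a b, V a -> V b -> a <> b -> Qu F Q a `&` Qu F Q b = set0) ->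
  (* (C.2) *)
  (forall a b, V a -> V b -> adm F Q a b ->
     exists2 K, K `<=` Qu F Q a & Qu F Q b `<=` img F K a) ->
  (* (C.3) *)
  (forall c, ~ V c -> Qu F Q c = set0) ->
  hfb_inv R F Q =
  inf [set h | exists (k : nat) (B : 'I_k -> set X) (GB : 'I_k -> U),
         refinement F Q V B GB /\ h = h_inv R F Q B GB].
Proof.
move=> _ [u0 _] _ _ _ Hcov _ _ HC3.
rewrite /hfb_inv; congr inf; apply/seteqP; split => h [k [A [G [HA ->]]]].
- case: (pselect (exists a, V a)) => [[a0 Va0]|nV].
  + have [Ainj Asub Acov Aimg] := HA.
    exists k, A, (fun i => if pselect (A i = set0) then a0 else G i); split.
      split => // i; case: pselect => [e|ne].
        by exists a0; split => //; rewrite e.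
      have AQ : A i `<=` Qu F Q (G i).
        move=> x Ax; rewrite /Qu /=; split; first exact: (Asub i x Ax).
        by move=> y Fy; apply: (Aimg i); exists x.
      exists (G i); split => //.
      case: (pselect (V (G i))) => // nVG; exfalso; apply: ne.
      by apply/seteqP; split => // x /AQ; rewrite HC3.
    apply: h_inv_ext => i; case: pselect => [e|] //= ; by rewrite e !img0.
  + have Q0 : Q = set0.
      apply/seteqP; split => // x /Hcov [a Va _]; apply: nV; by exists a.
    exists 0%N, (fun _ => set0), (fun _ => u0); split.
      split; first by move=> [].
        by rewrite Q0.
      by move=> [].
    rewrite /h_inv.
    rewrite (_ : r_inv R F Q A G = fun _ => 0); last by apply: funext => n; rewrite r_inv_Q0.
    by rewrite (_ : r_inv R F Q (fun _ : 'I_0 => set0) (fun _ => u0) = fun _ => 0) //; apply: funext => n; rewrite r_inv_Q0.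
- exists k, A, G; split => //.
  have [Binj Bcov HB] := HA.
  split => //.
  + move=> i x Bx; have [a [_ /(_ x Bx) [] //]] := HB i.
  + move=> i y [x Bx Fy]; have [a [_ /(_ x Bx) [_ H] E]] := HB i.
    by apply: H; rewrite -E.
Qed.
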